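(* Let $\mathcal{A},\mathcal{C}$ be small categories, $P:\mathcal{C}^{op}\times\mathcal{C}\to\mathbf{Set}$ and $Q:\mathcal{A}^{op}\times\mathcal{A}\times\mathcal{C}^{op}\times\mathcal{C}\to\mathbf{Set}$ functors, and let $\pi^*_{\mathcal{A}}(P)(a',a,x',x):=P(x',x)$. Then there are bijections, natural in $P$ and $Q$: (1) between dinatural transformations $\pi^*_{\mathcal{A}}(P)\Rightarrow Q$ (dinatural in $(a,x)\in\mathcal{A}\times\mathcal{C}$) and dinatural transformations $P\Rightarrow E$ (dinatural in $x\in\mathcal{C}$), where $E(x',x):=\int_{a\in\mathcal{A}}Q(a,a,x',x)$; (2) between dinatural transformations $C\Rightarrow P$ (dinatural in $x\in\mathcal{C}$), where $C(x',x):=\int^{a\in\mathcal{A}}Q(a,a,x',x)$, and dinatural transformations $Q\Rightarrow\pi^*_{\mathcal{A}}(P)$ (dinatural in $(a,x)\in\mathcal{A}\times\mathcal{C}$).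
   Context: For difunctors $F,G:\mathcal{B}^{op}\times\mathcal{B}\to\mathcal{D}$, a dinatural transformation is a family $\alpha_x:F(x,x)\to G(x,x)$ such that for every $f:a\to b$: $G(f,\mathrm{id}_b)\circ\alpha_b\circ F(\mathrm{id}_b,f)=G(\mathrm{id}_a,f)\circ\alpha_a\circ F(f,\mathrm{id}_a)$. For $H:\mathcal{A}^{op}\times\mathcal{A}\to\mathbf{Set}$, the end $\int_{a}H(a,a)$ is the set of families $(s_a\in H(a,a))_a$ with $H(\mathrm{id}_a,f)(s_a)=H(f,\mathrm{id}_b)(s_b)$ for all $f:a\to b$, and the coend $\int^aH(a,a)$ is the quotient of $\coprod_aH(a,a)$ by the equivalence relation generated by $H(f,\mathrm{id}_a)(u)\sim H(\mathrm{id}_b,f)(u)$ for $f:a\to b$, $u\in H(b,a)$; these are functorial in the remaining parameters $(x',x)$. *)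

(* Defs.v *)
From Stdlib Require Import Relations ProofIrrelevance FunctionalExtensionality PropExtensionality.

Record Cat := {
  ob :> Type;
  hom : ob -> ob -> Type;
  idm : forall a, hom a a;
  cmp : forall a b c, hom b c -> hom a b -> hom a c;
  cmp_id_l : forall a b (f : hom a b), cmp a b b (idm b) f = f;
  cmp_id_r : forall a b (f : hom a b), cmp a a b f (idm a) = f;
  cmp_assoc : forall a b c d (f : hom a b) (g : hom b c) (h : hom c d),
      cmp a c d h (cmp a b c g f) = cmp a b d (cmp b c d h g) f }.
Arguments hom {_} _ _.
Arguments idm {_} a.
Arguments cmp {_ _ _ _} g f.
Arguments cmp_id_l {_ _ _} f.
Arguments cmp_id_r {_ _ _} f.

Definition prodCat (A C : Cat) : Cat.
Proof.
  refine {| ob := (ob A * ob C)%type;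
            hom := fun p q => (hom (fst p) (fst q) * hom (snd p) (snd q))%type;
            idm := fun p => (idm (fst p), idm (snd p));
            cmp := fun p q r g f => (cmp (fst g) (fst f), cmp (snd g) (snd f)) |}.
  - intros [a x] [b y] [f g]; simpl; rewrite !cmp_id_l; reflexivity.
  - intros [a x] [b y] [f g]; simpl; rewrite !cmp_id_r; reflexivity.
  - intros p q r s [f1 f2] [g1 g2] [h1 h2]; simpl; rewrite !cmp_assoc; reflexivity.
Defined.

Definition pmor {A C : Cat} {a b : A} {x y : C} (f : hom a b) (g : hom x y)
  : @hom (prodCat A C) (a, x) (b, y) := (f, g).

(** * Difunctors B^op x B -> Set.
    [dmap F f' f : F a' a -> F b' b] for [f' : b' -> a'] (contravariant slot)
    and [f : a -> b] (covariant slot); it is F(f', f). *)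
Record Difun (B : Cat) := {
  dob :> B -> B -> Type;
  dmap : forall a' a b' b, hom b' a' -> hom a b -> dob a' a -> dob b' b;
  dmap_id : forall a' a (u : dob a' a), dmap a' a a' a (idm a') (idm a) u = u;
  dmap_comp : forall a' a b' b c' c (f' : hom b' a') (f : hom a b)
                (g' : hom c' b') (g : hom b c) (u : dob a' a),
      dmap b' b c' c g' g (dmap a' a b' b f' f u) = dmap a' a c' c (cmp f' g') (cmp g f) u }.
Arguments dob {B} _ _ _.
Arguments dmap {B} _ {a' a b' b} f' f u.
Arguments dmap_id {B} _ {a' a} u.
Arguments dmap_comp {B} _ {a' a b' b c' c} f' f g' g u.

Record NatT {B : Cat} (F G : Difun B) := {
  ncomp :> forall x' x, F x' x -> G x' x;
  nat_ax : forall a' a b' b (f' : hom b' a') (f : hom a b) (u : F a' a),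
      ncomp b' b (dmap F f' f u) = dmap G f' f (ncomp a' a u) }.
Arguments ncomp {B F G} _ _ _ _.
Arguments nat_ax {B F G} _ {a' a b' b} f' f u.

Record Dinat {B : Cat} (F G : Difun B) := {
  dcomp :> forall x, F x x -> G x x;
  dinat : forall a b (f : hom a b) (u : F b a),
      dmap G f (idm b) (dcomp b (dmap F (idm b) f u))
      = dmap G (idm a) f (dcomp a (dmap F f (idm a) u)) }.
Arguments dcomp {B F G} _ _ _.

Definition Bij {X Y : Type} (f : X -> Y) : Prop :=
  exists g : Y -> X, (forall x, g (f x) = x) /\ (forall y, f (g y) = y).

(** * The pullback pi^*_A(P)(a',a,x',x) := P(x',x).
    Functors A^op x A x C^op x C -> Set are represented as difunctors on
    the product category A x C, i.e. Q(a',a,x',x) := Q (a',x') (a,x). *)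
Definition pullbackA (A : Cat) {C : Cat} (P : Difun C) : Difun (prodCat A C).
Proof.
  refine {| dob := fun (p' p : prodCat A C) => P (snd p') (snd p);
            dmap := fun (p' p q' q : prodCat A C) (f' : @hom (prodCat A C) q' p')
                        (f : @hom (prodCat A C) p q) u => dmap P (snd f') (snd f) u |}.
  - intros; apply dmap_id.
  - intros; apply dmap_comp.
Defined.

Lemma sig_eq {X : Type} {Pr : X -> Prop} (u v : {x | Pr x}) :
  proj1_sig u = proj1_sig v -> u = v.
Proof.
  destruct u as [x p], v as [y q]; simpl; intros ->; f_equal; apply proof_irrelevance.
Qed.

Definition EndT {A C : Cat} (Q : Difun (prodCat A C)) (x' x : C) : Type :=
  { s : forall a : A, Q (a, x') (a, x) |
    forall (a b : A) (f : hom a b),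
      dmap Q (pmor (idm a) (idm x')) (pmor f (idm x)) (s a)
      = dmap Q (pmor f (idm x')) (pmor (idm b) (idm x)) (s b) }.

Ltac catsimp := cbn [pmor prodCat cmp idm fst snd] in *;
  repeat (rewrite ?cmp_id_l, ?cmp_id_r in *).

Lemma End_act_ok {A C : Cat} (Q : Difun (prodCat A C)) {x' x y' y : C}
  (h' : hom y' x') (h : hom x y) (s : EndT Q x' x) :
  forall (a b : A) (f : hom a b),
    dmap Q (pmor (idm a) (idm y')) (pmor f (idm y))
      (dmap Q (pmor (idm a) h') (pmor (idm a) h) (proj1_sig s a))
    = dmap Q (pmor f (idm y')) (pmor (idm b) (idm y))
      (dmap Q (pmor (idm b) h') (pmor (idm b) h) (proj1_sig s b)).
Proof.
  intros a b f.
  pose proof (f_equal (dmap Q (pmor (idm a) h') (pmor (idm b) h)) (proj2_sig s a b f)) as H.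
  rewrite !dmap_comp in H |- *. unfold pmor in *. catsimp. exact H.
Qed.

Definition End_act {A C : Cat} (Q : Difun (prodCat A C)) {x' x y' y : C}
  (h' : hom y' x') (h : hom x y) (s : EndT Q x' x) : EndT Q y' y :=
  exist _ (fun a => dmap Q (pmor (idm a) h') (pmor (idm a) h) (proj1_sig s a))
        (End_act_ok Q h' h s).

Definition EndD {A C : Cat} (Q : Difun (prodCat A C)) : Difun C.
Proof.
  refine {| dob := EndT Q; dmap := fun x' x y' y h' h s => End_act Q h' h s |}.
  - intros x' x s; apply sig_eq; simpl; apply functional_extensionality_dep; intro a.
    exact (dmap_id Q _).
  - intros; apply sig_eq; simpl; apply functional_extensionality_dep; intro a0.
    rewrite dmap_comp. unfold pmor. catsimp. reflexivity.
Defined.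

Definition End_nat {A C : Cat} {Q Q' : Difun (prodCat A C)} (psi : NatT Q Q')
  (x' x : C) (s : EndT Q x' x) : EndT Q' x' x.
Proof.
  refine (exist _ (fun a => psi (a, x') (a, x) (proj1_sig s a)) _).
  intros a b f. rewrite <- !(nat_ax psi). f_equal. exact (proj2_sig s a b f).
Defined.

Definition quot {T : Type} (R : relation T) : Type :=
  { S : T -> Prop | exists t, S = clos_refl_sym_trans T R t }.

Definition qcl {T : Type} (R : relation T) (t : T) : quot R :=
  exist _ (clos_refl_sym_trans T R t) (ex_intro _ t eq_refl).

Lemma crst_map {T U : Type} (R : relation T) (R' : relation U) (f : T -> U)
  (Hf : forall t t', R t t' -> clos_refl_sym_trans U R' (f t) (f t')) :
  forall t t', clos_refl_sym_trans T R t t' -> clos_refl_sym_trans U R' (f t) (f t').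
Proof.
  induction 1.
  - auto.
  - apply rst_refl.
  - apply rst_sym; auto.
  - eapply rst_trans; eauto.
Qed.

Lemma qmap_ok {T U : Type} (R : relation T) (R' : relation U) (f : T -> U)
  (Hf : forall t t', R t t' -> clos_refl_sym_trans U R' (f t) (f t'))
  (S : T -> Prop) (t : T) : S = clos_refl_sym_trans T R t ->
  (fun u => exists t0, S t0 /\ clos_refl_sym_trans U R' (f t0) u)
  = clos_refl_sym_trans U R' (f t).
Proof.
  intros ->. apply functional_extensionality; intro u.
  apply propositional_extensionality; split.
  - intros [t0 [H1 H2]]. eapply rst_trans; [|exact H2]. exact (crst_map R R' f Hf _ _ H1).
  - intros H. exists t. split; [apply rst_refl | exact H].
Qed.

Definition qmap {T U : Type} (R : relation T) (R' : relation U) (f : T -> U)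
  (Hf : forall t t', R t t' -> clos_refl_sym_trans U R' (f t) (f t'))
  (S : quot R) : quot R'.
Proof.
  refine (exist _ (fun u => exists t0, proj1_sig S t0 /\ clos_refl_sym_trans U R' (f t0) u) _).
  destruct S as [S [t Ht]]. exists (f t). exact (qmap_ok R R' f Hf S t Ht).
Defined.

Lemma qmap_id {T : Type} (R : relation T) (f : T -> T) Hf (S : quot R) :
  (forall t, f t = t) -> qmap R R f Hf S = S.
Proof.
  intros Hid. apply sig_eq. destruct S as [S [t Ht]]. simpl.
  rewrite (qmap_ok R R f Hf S t Ht), Hid. symmetry; exact Ht.
Qed.

Lemma qmap_comp {T U V : Type} (R : relation T) (R' : relation U) (R'' : relation V)
  (f : T -> U) Hf (g : U -> V) Hg (k : T -> V) Hk (S : quot R) :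
  (forall t, g (f t) = k t) -> qmap R' R'' g Hg (qmap R R' f Hf S) = qmap R R'' k Hk S.
Proof.
  intros Hgf. apply sig_eq. destruct S as [S [t Ht]]. simpl.
  rewrite (qmap_ok R' R'' g Hg _ (f t) (qmap_ok R R' f Hf S t Ht)).
  rewrite (qmap_ok R R'' k Hk S t Ht), Hgf. reflexivity.
Qed.

(** * Coends: C(x',x) := \int^a Q(a,a,x',x), the quotient of
    coprod_a Q(a,a,x',x) by the equivalence relation generated by
    Q(f,id_a)(u) ~ Q(id_b,f)(u) for f : a -> b, u : Q(b,a,x',x). *)
Definition CoendPre {A C : Cat} (Q : Difun (prodCat A C)) (x' x : C) : Type :=
  { a : A & Q (a, x') (a, x) }.

Definition CoendRel {A C : Cat} (Q : Difun (prodCat A C)) (x' x : C)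
  : relation (CoendPre Q x' x) :=
  fun t t' => exists (a b : A) (f : hom a b) (u : Q (b, x') (a, x)),
    t = existT _ a (dmap Q (pmor f (idm x')) (pmor (idm a) (idm x)) u) /\
    t' = existT _ b (dmap Q (pmor (idm b) (idm x')) (pmor f (idm x)) u).

Definition CoendT {A C : Cat} (Q : Difun (prodCat A C)) (x' x : C) : Type :=
  quot (CoendRel Q x' x).

Definition coend_pre_act {A C : Cat} (Q : Difun (prodCat A C)) {x' x y' y : C}
  (h' : hom y' x') (h : hom x y) (t : CoendPre Q x' x) : CoendPre Q y' y :=
  existT _ (projT1 t) (dmap Q (pmor (idm (projT1 t)) h') (pmor (idm (projT1 t)) h) (projT2 t)).

Lemma coend_pre_act_ok {A C : Cat} (Q : Difun (prodCat A C)) {x' x y' y : C}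
  (h' : hom y' x') (h : hom x y) :
  forall t t', CoendRel Q x' x t t' ->
    clos_refl_sym_trans _ (CoendRel Q y' y) (coend_pre_act Q h' h t) (coend_pre_act Q h' h t').
Proof.
  intros t t' [a [b [f [u [-> ->]]]]]. apply rst_step.
  exists a, b, f, (dmap Q (pmor (idm b) h') (pmor (idm a) h) u).
  unfold coend_pre_act; simpl. rewrite !dmap_comp. unfold pmor. catsimp.
  split; reflexivity.
Qed.

Definition Coend_act {A C : Cat} (Q : Difun (prodCat A C)) {x' x y' y : C}
  (h' : hom y' x') (h : hom x y) : CoendT Q x' x -> CoendT Q y' y :=
  qmap _ _ (coend_pre_act Q h' h) (coend_pre_act_ok Q h' h).

Definition CoendD {A C : Cat} (Q : Difun (prodCat A C)) : Difun C.
Proof.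
  refine {| dob := CoendT Q; dmap := fun x' x y' y h' h c => Coend_act Q h' h c |}.
  - intros x' x c. apply qmap_id. intros [a u]. unfold coend_pre_act; simpl.
    f_equal. exact (dmap_id Q u).
  - intros. unfold Coend_act. apply qmap_comp. intros [a0 w]. unfold coend_pre_act; simpl.
    rewrite dmap_comp. unfold pmor. catsimp. reflexivity.
Defined.

Definition coend_pre_nat {A C : Cat} {Q Q' : Difun (prodCat A C)} (psi : NatT Q Q')
  (x' x : C) (t : CoendPre Q x' x) : CoendPre Q' x' x :=
  existT _ (projT1 t) (psi (projT1 t, x') (projT1 t, x) (projT2 t)).

Lemma coend_pre_nat_ok {A C : Cat} {Q Q' : Difun (prodCat A C)} (psi : NatT Q Q') (x' x : C) :
  forall t t', CoendRel Q x' x t t' ->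
    clos_refl_sym_trans _ (CoendRel Q' x' x) (coend_pre_nat psi x' x t) (coend_pre_nat psi x' x t').
Proof.
  intros t t' [a [b [f [u [-> ->]]]]]. apply rst_step.
  exists a, b, f, (psi (b, x') (a, x) u). unfold coend_pre_nat; simpl.
  rewrite !(nat_ax psi). split; reflexivity.
Qed.

Definition Coend_nat {A C : Cat} {Q Q' : Difun (prodCat A C)} (psi : NatT Q Q')
  (x' x : C) : CoendT Q x' x -> CoendT Q' x' x :=
  qmap _ _ (coend_pre_nat psi x' x) (coend_pre_nat_ok psi x' x).

(* Main.v *)
Require Import Defs.
From Stdlib Require Import Relations ProofIrrelevance FunctionalExtensionality PropExtensionality ClassicalEpsilon.

Lemma dinat_eq {B : Cat} {F G : Difun B} (d1 d2 : Dinat F G) :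
  (forall x u, dcomp d1 x u = dcomp d2 x u) -> d1 = d2.
Proof.
  destruct d1 as [c1 p1], d2 as [c2 p2]; simpl; intro H.
  assert (c1 = c2) by (apply functional_extensionality_dep; intro x;
                        apply functional_extensionality; intro u; apply H).
  subst c2. f_equal. apply proof_irrelevance.
Qed.

Section Part1.
Variables (A C : Cat).

Lemma phi_end_ok (P : Difun C) (Q : Difun (prodCat A C)) (al : Dinat (pullbackA A P) Q)
  (x : C) (u : P x x) :
  forall (a b : A) (f : hom a b),
      dmap Q (pmor (idm a) (idm x)) (pmor f (idm x)) (dcomp al (a,x) u)
      = dmap Q (pmor f (idm x)) (pmor (idm b) (idm x)) (dcomp al (b,x) u).
Proof.
  intros a b f. pose proof (dinat _ _ al (a,x) (b,x) (pmor f (idm x)) u) as H.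
  cbn in H. rewrite !dmap_id in H. symmetry. exact H.
Qed.

Definition phi_end (P : Difun C) (Q : Difun (prodCat A C)) (al : Dinat (pullbackA A P) Q) (x : C) (u : P x x) : EndT Q x x :=
  exist _ (fun a => dcomp al (a,x) u) (phi_end_ok P Q al x u).

Lemma phi_dinat (P : Difun C) (Q : Difun (prodCat A C)) (al : Dinat (pullbackA A P) Q) : forall (x y : C) (h : hom x y) (u : P y x),
  dmap (EndD Q) h (idm y) (phi_end P Q al y (dmap P (idm y) h u))
  = dmap (EndD Q) (idm x) h (phi_end P Q al x (dmap P h (idm x) u)).
Proof.
  intros x y h u. apply sig_eq. cbn. apply functional_extensionality_dep; intro a.
  exact (dinat _ _ al (a,x) (a,y) (pmor (idm a) h) u).
Qed.

Definition Phi (P : Difun C) (Q : Difun (prodCat A C)) (al : Dinat (pullbackA A P) Q) : Dinat P (EndD Q) :=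
  Build_Dinat C P (EndD Q) (phi_end P Q al) (phi_dinat P Q al).

Definition phiinv_c (P : Difun C) (Q : Difun (prodCat A C)) (be : Dinat P (EndD Q))
  (p : prodCat A C) : pullbackA A P p p -> Q p p :=
  match p as p0 return pullbackA A P p0 p0 -> Q p0 p0 with
  | (a, x) => fun u => proj1_sig (dcomp be x u) a end.

Lemma phiinv_dinat (P : Difun C) (Q : Difun (prodCat A C)) (be : Dinat P (EndD Q)) :
  forall (p q : prodCat A C) (f : hom p q) (u : pullbackA A P q p),
  dmap Q f (idm q) ((phiinv_c P Q be) q (dmap (pullbackA A P) (idm q) f u))
  = dmap Q (idm p) f ((phiinv_c P Q be) p (dmap (pullbackA A P) f (idm p) u)).
Proof.
  intros [a x] [b y] [g h] u. cbn in *.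
  pose proof (f_equal (fun s => proj1_sig s b) (dinat _ _ be x y h u)) as H. cbn in H.
  set (s := dcomp be y (dmap P (idm y) h u)) in *.
  set (t := dcomp be x (dmap P h (idm x) u)) in *.
  pose proof (proj2_sig t a b g) as Ht.
  transitivity (dmap Q (pmor g (idm x)) (pmor (idm b) (idm y))
                  (dmap Q (pmor (idm b) h) (pmor (idm b) (idm y)) (proj1_sig s b))).
  { rewrite dmap_comp. unfold pmor; catsimp. reflexivity. }
  rewrite H.
  transitivity (dmap Q (pmor (idm a) (idm x)) (pmor (idm b) h)
                  (dmap Q (pmor g (idm x)) (pmor (idm b) (idm x)) (proj1_sig t b))).
  { rewrite !dmap_comp. unfold pmor; catsimp. reflexivity. }
  transitivity (dmap Q (pmor (idm a) (idm x)) (pmor (idm b) h)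
                  (dmap Q (pmor (idm a) (idm x)) (pmor g (idm x)) (proj1_sig t a))).
  { apply f_equal. exact (eq_sym Ht). }
  rewrite dmap_comp. unfold pmor; catsimp. reflexivity.
Qed.

Definition PhiInv (P : Difun C) (Q : Difun (prodCat A C)) (be : Dinat P (EndD Q)) : Dinat (pullbackA A P) Q :=
  Build_Dinat (prodCat A C) (pullbackA A P) Q (phiinv_c P Q be) (phiinv_dinat P Q be).


Lemma part1 :
  (exists Phi : forall (P : Difun C) (Q : Difun (prodCat A C)),
       Dinat (pullbackA A P) Q -> Dinat P (EndD Q),
     (forall P Q, Bij (Phi P Q)) /\
     (forall (P P' : Difun C) (Q Q' : Difun (prodCat A C))
        (phi : NatT P' P) (psi : NatT Q Q')
        (alpha : Dinat (pullbackA A P) Q) (alpha' : Dinat (pullbackA A P') Q'),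
        (forall (p : prodCat A C) (u : P' (snd p) (snd p)),
            dcomp alpha' p u = ncomp psi p p (dcomp alpha p (ncomp phi (snd p) (snd p) u))) ->
        forall (x : C) (u : P' x x),
          dcomp (Phi P' Q' alpha') x u
          = End_nat psi x x (dcomp (Phi P Q alpha) x (ncomp phi x x u)))).
Proof.
  exists Phi. split.
  - intros P Q. exists (PhiInv P Q). split.
    + intro al. apply dinat_eq. intros [a x] u. reflexivity.
    + intro be. apply dinat_eq. intros x u. apply sig_eq. reflexivity.
  - intros P P' Q Q' phi psi al al' H x u. apply sig_eq. cbn.
    apply functional_extensionality_dep; intro a. exact (H (a,x) u).
Qed.
End Part1.

Section Quot.
Lemma qcl_eq {T} (R : relation T) t t' : clos_refl_sym_trans T R t t' -> qcl R t = qcl R t'.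
Proof.
  intro H. apply sig_eq. simpl. apply functional_extensionality; intro z.
  apply propositional_extensionality; split; intro K.
  - eapply rst_trans; [apply rst_sym; exact H| exact K].
  - eapply rst_trans; [exact H| exact K].
Qed.

Lemma qcl_surj {T} (R : relation T) (c : quot R) : exists t, c = qcl R t.
Proof.
  destruct c as [S [t Ht]]. exists t. apply sig_eq. simpl. exact Ht.
Qed.

Lemma qmap_qcl {T U} (R : relation T) (R' : relation U) f Hf t :
  qmap R R' f Hf (qcl R t) = qcl R' (f t).
Proof. apply sig_eq. simpl. exact (qmap_ok R R' f Hf _ t eq_refl). Qed.

Definition qlift {T Y} (R : relation T) (F : T -> Y) (c : quot R) : Y :=
  F (proj1_sig (constructive_indefinite_description _ (proj2_sig c))).

Lemma qlift_qcl {T Y} (R : relation T) (F : T -> Y) t :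
  (forall t t', R t t' -> F t = F t') -> qlift R F (qcl R t) = F t.
Proof.
  intro HF. unfold qlift.
  destruct (constructive_indefinite_description _ (proj2_sig (qcl R t))) as [t0 e].
  simpl in *. assert (K : clos_refl_sym_trans T R t t0).
  { rewrite e. apply rst_refl. }
  symmetry; clear e. induction K; [auto|reflexivity|symmetry; assumption|etransitivity; eassumption].
Qed.
End Quot.

Section Part2.
Variables (A C : Cat).

Lemma coend_act_qcl (Q : Difun (prodCat A C)) {x' x y' y : C} (h' : hom y' x') (h : hom x y) t :
  dmap (CoendD Q) h' h (qcl (CoendRel Q x' x) t) = qcl (CoendRel Q y' y) (coend_pre_act Q h' h t).
Proof. exact (qmap_qcl _ _ _ _ t). Qed.

Definition psi_c (P : Difun C) (Q : Difun (prodCat A C)) (be : Dinat (CoendD Q) P)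
  (p : prodCat A C) : Q p p -> pullbackA A P p p :=
  match p as p0 return Q p0 p0 -> pullbackA A P p0 p0 with
  | (a, x) => fun u => dcomp be x (qcl (CoendRel Q x x) (existT _ a u)) end.

Lemma psi_dinat (P : Difun C) (Q : Difun (prodCat A C)) (be : Dinat (CoendD Q) P) :
  forall (p q : prodCat A C) (f : hom p q) (u : Q q p),
  dmap (pullbackA A P) f (idm q) (psi_c P Q be q (dmap Q (idm q) f u))
  = dmap (pullbackA A P) (idm p) f (psi_c P Q be p (dmap Q f (idm p) u)).
Proof.
  intros [a x] [b y] [g h] u. cbn [psi_c pullbackA dmap snd fst prodCat idm].
  pose proof (dinat _ _ be x y h
     (qcl (CoendRel Q y x) (existT _ a (dmap Q (pmor g (idm y)) (pmor (idm a) (idm x)) u)))) as H.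
  rewrite !coend_act_qcl in H. unfold coend_pre_act in H. cbn [projT1 projT2] in H.
  rewrite !dmap_comp in H. unfold pmor in H. catsimp.
  etransitivity; [|etransitivity; [exact H|]].
  - f_equal. f_equal. apply qcl_eq. apply rst_sym, rst_step.
    exists a, b, g, (dmap Q (pmor (idm b) (idm y)) (pmor (idm a) h) u).
    unfold pmor. rewrite !dmap_comp. catsimp. split; reflexivity.
  - reflexivity.
Qed.

Definition Psi (P : Difun C) (Q : Difun (prodCat A C)) (be : Dinat (CoendD Q) P)
  : Dinat Q (pullbackA A P) :=
  Build_Dinat (prodCat A C) Q (pullbackA A P) (psi_c P Q be) (psi_dinat P Q be).

Definition psiinv_F (P : Difun C) (Q : Difun (prodCat A C)) (ga : Dinat Q (pullbackA A P))
  (x : C) (t : CoendPre Q x x) : P x x :=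
  dcomp ga (projT1 t, x) (projT2 t).

Lemma psiinv_F_ok (P : Difun C) (Q : Difun (prodCat A C)) (ga : Dinat Q (pullbackA A P)) x :
  forall t t', CoendRel Q x x t t' -> psiinv_F P Q ga x t = psiinv_F P Q ga x t'.
Proof.
  intros t t' [a [b [f [u [-> ->]]]]]. unfold psiinv_F; cbn [projT1 projT2].
  pose proof (dinat _ _ ga (a,x) (b,x) (pmor f (idm x)) u) as H.
  cbn in H. rewrite !dmap_id in H. symmetry. exact H.
Qed.

Definition psiinv_c (P : Difun C) (Q : Difun (prodCat A C)) (ga : Dinat Q (pullbackA A P))
  (x : C) (c : CoendD Q x x) : P x x := qlift _ (psiinv_F P Q ga x) c.

Lemma psiinv_dinat (P : Difun C) (Q : Difun (prodCat A C)) (ga : Dinat Q (pullbackA A P)) :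
  forall (x y : C) (h : hom x y) (c : CoendD Q y x),
  dmap P h (idm y) (psiinv_c P Q ga y (dmap (CoendD Q) (idm y) h c))
  = dmap P (idm x) h (psiinv_c P Q ga x (dmap (CoendD Q) h (idm x) c)).
Proof.
  intros x y h c. destruct (qcl_surj _ c) as [[a v] ->].
  rewrite !coend_act_qcl. unfold psiinv_c. rewrite !qlift_qcl by apply psiinv_F_ok.
  unfold psiinv_F, coend_pre_act. cbn [projT1 projT2].
  exact (dinat _ _ ga (a,x) (a,y) (pmor (idm a) h) v).
Qed.

Definition PsiInv (P : Difun C) (Q : Difun (prodCat A C)) (ga : Dinat Q (pullbackA A P))
  : Dinat (CoendD Q) P :=
  Build_Dinat C (CoendD Q) P (psiinv_c P Q ga) (psiinv_dinat P Q ga).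

Lemma part2 :
  (exists Psi : forall (P : Difun C) (Q : Difun (prodCat A C)),
       Dinat (CoendD Q) P -> Dinat Q (pullbackA A P),
     (forall P Q, Bij (Psi P Q)) /\
     (forall (P P' : Difun C) (Q Q' : Difun (prodCat A C))
        (phi : NatT P P') (psi : NatT Q' Q)
        (beta : Dinat (CoendD Q) P) (beta' : Dinat (CoendD Q') P'),
        (forall (x : C) (c : CoendT Q' x x),
            dcomp beta' x c = ncomp phi x x (dcomp beta x (Coend_nat psi x x c))) ->
        forall (p : prodCat A C) (u : Q' p p),
          dcomp (Psi P' Q' beta') p u
          = ncomp phi (snd p) (snd p) (dcomp (Psi P Q beta) p (ncomp psi p p u)))).
Proof.
  exists Psi. split.
  - intros P Q. exists (PsiInv P Q). split.
    + intro be. apply dinat_eq. intros x c. destruct (qcl_surj _ c) as [[a v] ->].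
      cbn [dcomp PsiInv Psi]. unfold psiinv_c. rewrite qlift_qcl by apply psiinv_F_ok. reflexivity.
    + intro ga. apply dinat_eq. intros [a x] u. cbn [dcomp PsiInv Psi psi_c]. unfold psiinv_c.
      rewrite qlift_qcl by apply psiinv_F_ok. reflexivity.
  - intros P P' Q Q' phi psi be be' H [a x] u. simpl. rewrite H.
    unfold Coend_nat. rewrite qmap_qcl. reflexivity.
Qed.
End Part2.


Theorem mainTheorem4 (A C : Cat) :
  (* (1)  Dinat(pi_A^* P, Q)  ~=  Dinat(P, \int_a Q(a,a,-,-)), naturally in P and Q *)
  (exists Phi : forall (P : Difun C) (Q : Difun (prodCat A C)),
       Dinat (pullbackA A P) Q -> Dinat P (EndD Q),
     (forall P Q, Bij (Phi P Q)) /\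
     (forall (P P' : Difun C) (Q Q' : Difun (prodCat A C))
        (phi : NatT P' P) (psi : NatT Q Q')
        (alpha : Dinat (pullbackA A P) Q) (alpha' : Dinat (pullbackA A P') Q'),
        (forall (p : prodCat A C) (u : P' (snd p) (snd p)),
            dcomp alpha' p u = ncomp psi p p (dcomp alpha p (ncomp phi (snd p) (snd p) u))) ->
        forall (x : C) (u : P' x x),
          dcomp (Phi P' Q' alpha') x u
          = End_nat psi x x (dcomp (Phi P Q alpha) x (ncomp phi x x u)))) /\
  (* (2)  Dinat(\int^a Q(a,a,-,-), P)  ~=  Dinat(Q, pi_A^* P), naturally in P and Q *)
  (exists Psi : forall (P : Difun C) (Q : Difun (prodCat A C)),
       Dinat (CoendD Q) P -> Dinat Q (pullbackA A P),
     (forall P Q, Bij (Psi P Q)) /\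
     (forall (P P' : Difun C) (Q Q' : Difun (prodCat A C))
        (phi : NatT P P') (psi : NatT Q' Q)
        (beta : Dinat (CoendD Q) P) (beta' : Dinat (CoendD Q') P'),
        (forall (x : C) (c : CoendT Q' x x),
            dcomp beta' x c = ncomp phi x x (dcomp beta x (Coend_nat psi x x c))) ->
        forall (p : prodCat A C) (u : Q' p p),
          dcomp (Psi P' Q' beta') p u
          = ncomp phi (snd p) (snd p) (dcomp (Psi P Q beta) p (ncomp psi p p u)))).
Proof. split; [apply part1 | apply part2]. Qed.
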